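(* In the two-unicast setting, suppose $k_{1-2}+k_{2-1}\le\min(k_{12-1},k_{12-2})$. Then every pair of nonnegative integers $(R_1,R_2)$ with $$R_1\le k_{12-1}-k_{2-1},\qquad R_2\le k_{12-2}-k_{1-2}$$ is achievable.
   Context: $G=(V,E)$ is a directed acyclic network with unit-capacity edges (each carrying one symbol of $GF(q)$ per use), sources $s_1,s_2$ (no incoming edges) and terminals $t_1,t_2$ (no outgoing edges); $t_i$ wants the message of $s_i$. For $N_1,N_2\subseteq\{1,2\}$, $k_{N_1-N_2}$ is the minimum cut from $\{s_i:i\in N_1\}$ to $\{t_j:j\in N_2\}$. A linear network code over $GF(q)$: symbols on edges leaving a non-source node are $GF(q)$-linear combinations of the node's incoming symbols; symbols on edges leaving $s_i$ are $GF(q)$-linear combinations of $s_i$'s message symbols. $(R_1,R_2)$ is achievable if for some finite field $GF(q)$ there is a linear network code such that, when $s_i$ observes $R_i$ independent symbols of $GF(q)$, $t_1$ uniquely recovers $s_1$'s message and $t_2$ uniquely recovers $s_2$'s message (neither terminal needs to recover the other source). *)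

(* Defs.v *)
From HB Require Import structures.
From mathcomp Require Import all_boot all_order all_algebra all_field.
Set Implicit Arguments. Unset Strict Implicit. Unset Printing Implicit Defensive.
Import GRing.Theory.

(* A network: finite node type V, finite edge type E (parallel edges allowed,
   each edge has unit capacity), tail map tl and head map hd. *)
Section Network.
Variables (V E : finType) (tl hd : E -> V).

Definition avoid_rel (C : {set E}) : rel V :=
  fun x y => [exists e, [&& e \notin C, tl e == x & hd e == y]].

Definition full_rel : rel V := avoid_rel set0.

Definition acyclic : Prop := forall e : E, ~~ connect full_rel (hd e) (tl e).

Definition separates (S T : pred V) (C : {set E}) : bool :=
  [forall x, forall y, (S x && T y) ==> ~~ connect (avoid_rel C) x y].

Definition mincut (S T : pred V) : nat :=
  \big[minn/#|E|]_(C : {set E} | separates S T C) #|C|.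

Local Open Scope ring_scope.

Definition consistent (F : finFieldType) (s1 s2 : V) (R1 R2 : nat)
    (a1 : E -> 'rV[F]_R1) (a2 : E -> 'rV[F]_R2) (b : E -> E -> F)
    (x1 : 'rV[F]_R1) (x2 : 'rV[F]_R2) (y : E -> F) : Prop :=
  forall e : E,
    (tl e = s1 -> y e = \sum_(k < R1) a1 e 0 k * x1 0 k) /\
    (tl e = s2 -> y e = \sum_(k < R2) a2 e 0 k * x2 0 k) /\
    (tl e <> s1 -> tl e <> s2 ->
       y e = \sum_(e' : E | hd e' == tl e) b e' e * y e').

(* (R1, R2) achievable by a linear network code over some finite field:
   the symbols on the incoming edges of t_i determine the message of s_i *)
Definition achievable (s1 s2 t1 t2 : V) (R1 R2 : nat) : Prop :=
  exists (F : finFieldType) (a1 : E -> 'rV[F]_R1) (a2 : E -> 'rV[F]_R2)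
         (b : E -> E -> F),
    forall (x1 x1' : 'rV[F]_R1) (x2 x2' : 'rV[F]_R2) (y y' : E -> F),
      consistent s1 s2 a1 a2 b x1 x2 y ->
      consistent s1 s2 a1 a2 b x1' x2' y' ->
      ((forall e, hd e = t1 -> y e = y' e) -> x1 = x1') /\
      ((forall e, hd e = t2 -> y e = y' e) -> x2 = x2').

End Network.

(* Main.v *)
Require Import Defs.
From HB Require Import structures.
From mathcomp Require Import all_boot all_order all_algebra all_field.
From mathcomp Require Import zify.
Set Implicit Arguments. Unset Strict Implicit. Unset Printing Implicit Defensive.
Import GRing.Theory.

Module Dev.
Local Open Scope ring_scope.
Lemma avoid_subspaces (F : finFieldType) n (H : 'M[F]_n) (I : eqType)
  (W : I -> 'M[F]_n) (s : seq I) :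
  (forall i, i \in s -> ~~ (H <= W i)%MS) -> (size s < #|F|)%N ->
  exists u : 'rV[F]_n, (u <= H)%MS /\ forall i, i \in s -> ~~ (u <= W i)%MS.
Proof.
elim: s => [|i0 s IH] HW Hs.
  by exists 0; split=> [|i //]; apply: sub0mx.
have [u [uH uW]] : exists u : 'rV[F]_n, (u <= H)%MS /\ forall i, i \in s -> ~~ (u <= W i)%MS.
  apply: IH => [i Hi|]; first by apply: HW; rewrite inE Hi orbT.
  by apply: ltn_trans Hs.
case uW0: (u <= W i0)%MS; last first.
  exists u; split=> // i; rewrite inE => /orP [/eqP -> |]; first by rewrite uW0.
  exact: uW.
have /row_subPn [j Hj] := HW i0 (mem_head _ _).
set w := row j H.
pose v (l : F) : 'rV[F]_n := w + l *: u.
have Hex : [exists l : F, all (fun i => ~~ (v l <= W i)%MS) s].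
  apply: contraT => /existsPn Hall.
  have Hh : forall l : F, has (fun i => (v l <= W i)%MS) s.
    by move=> l; move: (Hall l); rewrite -has_predC; apply: sub_has => i; rewrite /= negbK.
  have Hf : forall l : F, (find (fun i => (v l <= W i)%MS) s < size s)%N.
    by move=> l; rewrite -has_find.
  pose f (l : F) : 'I_(size s) := Ordinal (Hf l).
  have finj : injective f.
    move=> l1 l2 /(congr1 val) /= Heq.
    have h1 := nth_find i0 (Hh l1); have h2 := nth_find i0 (Hh l2).
    rewrite -Heq in h2.
    set x := nth i0 s _ in h1 h2.
    have xs : x \in s by rewrite mem_nth // -has_find.
    apply/eqP; apply/negPn/negP => Hne.
    have : ((l1 - l2) *: u <= W x)%MS.
      have -> : (l1 - l2) *: u = v l1 - v l2.
        by rewrite scalerBl; rewrite opprD addrACA subrr add0r.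
      by apply: addmx_sub => //; rewrite eqmx_opp.
    move=> /(scalemx_sub (l1 - l2)^-1); rewrite scalerA mulVf ?subr_eq0 // scale1r => Hu.
    by move: (uW x xs); rewrite Hu.
  have := @leq_card _ _ f finj; rewrite card_ord => Hle.
  by have := leq_trans (ltnW Hs) Hle; rewrite /= ltnn.
case/existsP: Hex => l /allP Hl.
exists (v l); split.
  by apply: addmx_sub; [apply: row_sub | apply: scalemx_sub].
move=> i; rewrite inE => /orP [/eqP -> |/Hl //].
apply/negP => Hwl; move: Hj; apply/negP/negPn.
rewrite -/w; have -> : w = v l - l *: u by rewrite /v addrK.
by apply: addmx_sub => //; rewrite eqmx_opp; apply: scalemx_sub.
Qed.

Lemma gen_choice (F : finFieldType) n (H : 'M[F]_n) (T J : finType)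
  (U : J -> 'M[F]_n) (S : J -> {set T}) :
  (#|J| < #|F|)%N ->
  exists g : T -> 'rV[F]_n, (forall e, g e <= H)%MS /\ forall j,
   (minn (\rank (U j + H)%MS) (\rank (U j) + #|S j|)
     <= \rank (U j + \sum_(e in S j) <<g e>>)%MS)%N.
Proof.
move=> HJ.
pose SD j (D : seq T) := [set e in S j | e \in D].
suff : forall D : seq T, uniq D -> exists g : T -> 'rV[F]_n, (forall e, g e <= H)%MS /\ forall j,
   (minn (\rank (U j + H)%MS) (\rank (U j) + #|SD j D|)
     <= \rank (U j + \sum_(e in SD j D) <<g e>>)%MS)%N.
  case/(_ (enum T) (enum_uniq T)) => g [gH Hg]; exists g; split=> // j.
  have -> : S j = SD j (enum T) by apply/setP => e; rewrite !inE mem_enum andbT.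
  exact: Hg.
elim=> [|e0 D IH] /=.
  move=> _; exists (fun _ => 0); split=> [e|j]; first exact: sub0mx.
  have -> : SD j [::] = set0 by apply/setP => e; rewrite !inE andbF.
  rewrite cards0 big_set0 addn0; apply: leq_trans (geq_minr _ _) _.
  apply: mxrankS; exact: addsmxSl.
case/andP => e0D uD; case: (IH uD) => g [gH Hg].
pose X j := (U j + \sum_(e in SD j D) <<g e>>)%MS.
pose bad j := (e0 \in S j) && ~~ (H <= X j)%MS.
have [u [uH uX]] : exists u : 'rV[F]_n, (u <= H)%MS /\
    forall j, j \in filter bad (enum J) -> ~~ (u <= X j)%MS.
  apply: avoid_subspaces.
    by move=> j; rewrite mem_filter => /andP [/andP [_ ->]].
  by apply: leq_ltn_trans HJ; rewrite cardE size_filter; apply: count_size.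

pose g' e := if e == e0 then u else g e.
exists g'; split=> [e|j]; first by rewrite /g'; case: eqP.
have sumE : (\sum_(e in SD j D) <<g' e>> = \sum_(e in SD j D) <<g e>>)%MS.
  apply: eq_bigr => e; rewrite !inE /g' => /andP [_ eD].
  by case: eqP => // Ee; move: e0D; rewrite -Ee eD.
have e0SD : e0 \notin SD j D by rewrite !inE (negbTE e0D) andbF.
case Se0: (e0 \in S j).
  have -> : SD j (e0 :: D) = e0 |: SD j D.
    by apply/setP => e; rewrite !inE; case: eqP => [->|]; rewrite ?Se0.
  rewrite cardsU1 e0SD big_setU1 //= sumE /g' eqxx.
  rewrite addsmxA (addsmxC (U j) <<u>>%MS) -addsmxA.
  set Y := (U j + \sum_(e in SD j D) <<g e>>)%MS.
  case Hb: (bad j).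
    have : ~~ (u <= X j)%MS by apply: uX; rewrite mem_filter Hb mem_enum.
    move=> uY.
    have : (Y < <<u>> + Y)%MS.
      by rewrite ltmxE addsmxSr /= addsmx_sub negb_and genmxE uY.
    move/rank_ltmx => Hlt.
    move: (Hg j); rewrite -/Y => Hj; lia.
  move: Hb; rewrite /bad Se0 /= => /negbFE HX.
  apply: leq_trans (geq_minl _ _) _.
  apply: mxrankS; rewrite addsmx_sub; apply/andP; split.
    apply: submx_trans (addsmxSr _ _); exact: addsmxSl.
  apply: submx_trans (addsmxSr _ _); exact: HX.
have -> : SD j (e0 :: D) = SD j D.
  by apply/setP => e; rewrite !inE; case: eqP => [->|]; rewrite ?Se0.
by rewrite sumE; apply: Hg.
Qed.
Section Graph.
Variables (V E : finType) (tl hd : E -> V).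

Lemma avoid_edge (C : {set E}) e : e \notin C -> avoid_rel tl hd C (tl e) (hd e).
Proof. by move=> eC; apply/existsP; exists e; rewrite eC !eqxx. Qed.

Lemma avoidP (C : {set E}) x y : avoid_rel tl hd C x y ->
  exists e, [/\ e \notin C, tl e = x & hd e = y].
Proof. by case/existsP => e /and3P [eC /eqP <- /eqP <-]; exists e. Qed.

Lemma reach_mono (C C' : {set E}) x y : C \subset C' ->
  connect (avoid_rel tl hd C') x y -> connect (avoid_rel tl hd C) x y.
Proof.
move=> sCC'; apply: connect_sub => a b /avoidP [e [eC <- <-]].
apply: connect1; apply: avoid_edge; apply: contra eC; exact: (subsetP sCC').
Qed.

Lemma connect_first (r : rel V) x y : x != y -> connect r x y ->
  exists z, r x z /\ connect r z y.
Proof.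
move=> xy /connectP [[|z p]] /=; first by move=> _ Exy; rewrite Exy eqxx in xy.
by case/andP => rxz pz ->; exists z; split=> //; apply/connectP; exists p.
Qed.

Lemma reach_stuck (C : {set E}) t y : (forall e, tl e != t) ->
  connect (avoid_rel tl hd C) t y -> y = t.
Proof.
move=> Hout; case: (eqVneq t y) => [-> //|ty] /(connect_first ty) [z [/avoidP [e [_ Het _]] _]].
by move: (Hout e); rewrite Het eqxx.
Qed.

Definition anc (v : V) := [set u | connect (full_rel tl hd) u v].

Lemma anc_lt e : acyclic tl hd -> (#|anc (tl e)| < #|anc (hd e)|)%N.
Proof.
move=> Hac; apply: proper_card; apply/properP; split.
  apply/subsetP => u; rewrite !inE => Hu; apply: connect_trans Hu _.
  by apply: connect1; apply: avoid_edge; rewrite inE.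
exists (hd e); rewrite !inE ?connect0 //; exact: Hac.
Qed.

Lemma no_loop e : acyclic tl hd -> tl e != hd e.
Proof. by move=> Hac; apply/eqP => Ee; move: (Hac e); rewrite Ee connect0. Qed.

End Graph.

Lemma sumsmx_mono (F : fieldType) n (I : finType) (P Q : pred I) (A B : I -> 'M[F]_n) :
  (forall i, P i -> Q i /\ (A i <= B i)%MS) ->
  (\sum_(i | P i) A i <= \sum_(i | Q i) B i)%MS.
Proof.
move=> H; apply/sumsmx_subP => i Pi; case: (H i Pi) => Qi AB.
exact: (sumsmx_sup i Qi AB).
Qed.

Section Proc.
Variables (V E : finType) (tl hd : E -> V).
Hypothesis Hacyc : acyclic tl hd.
Variables (t1 t2 : V).
Hypothesis Ht12 : t1 != t2.
Hypothesis Ht1out : forall e, tl e != t1.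
Hypothesis Ht2out : forall e, tl e != t2.
Variables (F : finFieldType) (n : nat) (V0 : V -> 'M[F]_n).
Hypothesis HV0t1 : V0 t1 = 0.
Hypothesis HV0t2 : V0 t2 = 0.
Hypothesis HF : (#|{: {set E} * bool}| < #|F|)%N.
Variable tgt : bool -> nat.

Definition tt (b : bool) := if b then t1 else t2.
Definition reach (C : {set E}) u t := connect (avoid_rel tl hd C) u t.

Hypothesis Hinit : forall C b,
  (tgt b <= \rank (\sum_(u | reach C u (tt b)) V0 u)%MS + #|C|)%N.

Definition Hv (g : E -> 'rV[F]_n) v := (V0 v + \sum_(e | hd e == v) <<g e>>)%MS.
Definition InP (g : E -> 'rV[F]_n) (P : {set V}) (C : {set E}) u :=
  (V0 u + \sum_(e | (tl e \in P) && (hd e == u) && (e \notin C)) <<g e>>)%MS.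
Definition Wf g (P : {set V}) C t := (\sum_(u | (u \notin P) && reach C u t) InP g P C u)%MS.
Definition NT := [set v | (v != t1) && (v != t2)].

Definition Inv (P : {set V}) g := [/\ P \subset NT, (forall e, hd e \in P -> tl e \in P),
  (forall e, tl e \in P -> (g e <= Hv g (tl e))%MS) &
  (forall C b, tgt b <= \rank (Wf g P C (tt b)) + #|C|)%N].

Lemma tt_out b e : tl e != tt b.
Proof. by case: b. Qed.

Lemma step (P : {set V}) g v : Inv P g -> v \notin P -> v \in NT ->
  (forall e, hd e = v -> tl e \in P) -> exists g', Inv (v |: P) g'.
Proof.
case=> PNT Pcl Pg Pb vP vNT vin.
pose Pn := v |: P.
pose U (j : ({set E} * bool)%type) :=
  (\sum_(u | (u \notin Pn) && reach j.1 u (tt j.2)) InP g P j.1 u)%MS.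
pose S (j : ({set E} * bool)%type) :=
  [set e | (tl e == v) && (e \notin j.1) && reach j.1 (hd e) (tt j.2)].
have [g0 [g0H Hg0]] := gen_choice (Hv g v) U S HF.
pose g' e := if tl e == v then g0 e else g e.
have f1 e : tl e != v -> g' e = g e by rewrite /g' => /negbTE ->.
have f2 e : tl e \in P -> tl e != v by apply: contraTneq => ->.
have f3 u : u \in Pn -> forall e, hd e == u -> tl e \in P.
  rewrite !inE => /orP [/eqP -> e /eqP|uP e /eqP Eu]; first exact: vin.
  by apply: Pcl; rewrite Eu.
have Hvsame u : u \in Pn -> Hv g' u = Hv g u.
  move=> uPn; rewrite /Hv; congr (_ + _)%MS; apply: eq_bigr => e He.
  by rewrite f1 // f2 // (f3 u).
have InPle C u : (InP g P C u <= InP g' Pn C u)%MS.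
  rewrite /InP; apply: addsmxS => //; apply: sumsmx_mono => e /andP [/andP [eP ->] ->].
  by rewrite !inE eP orbT f1 ?f2.
exists g'; split.
- by rewrite subUset sub1set vNT PNT.
- move=> e; rewrite !inE => /orP [/eqP He|/Pcl ->]; last by rewrite orbT.
  by rewrite vin // orbT.
- move=> e eP; rewrite Hvsame //; move: eP; rewrite !inE => /orP [/eqP Ev|eP].
    by rewrite /g' Ev eqxx; exact: g0H.
  by rewrite f1 ?f2 //; apply: Pg.
move=> C b.
pose j := (C, b).
set t := tt b.
have key : (U j + \sum_(e in S j) <<g0 e>> <= Wf g' Pn C t)%MS.
  rewrite addsmx_sub; apply/andP; split.
    by apply: sumsmx_mono => u /= Hu; split.
  apply/sumsmx_subP => e; rewrite inE => /andP [/andP [/eqP Ev eC] Hr].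
  have hdPn : hd e \notin Pn.
    rewrite !inE negb_or; apply/andP; split.
      by rewrite -Ev eq_sym; apply: no_loop.
    by apply/negP => /Pcl; rewrite Ev (negbTE vP).
  apply: (sumsmx_sup (hd e)) => /=; first by rewrite hdPn.
  rewrite /InP; apply: submx_trans (addsmxSr _ _).
  apply: (sumsmx_sup e); first by rewrite /Pn !inE Ev !eqxx eC.
  by rewrite /g' Ev eqxx.
have Ha : (Wf g P C t <= U j + Hv g v)%MS.
  apply/sumsmx_subP => u /andP [uP Hr].
  case: (eqVneq u v) => [->|uv].
    apply: submx_trans (addsmxSr _ _); rewrite /InP /Hv; apply: addsmxS => //.
    by apply: sumsmx_mono => e /andP [/andP [_ ->] _].
  apply: submx_trans (addsmxSl _ _); apply: (sumsmx_sup u) => //=.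
  by rewrite !inE negb_or uv uP Hr.
have nrv : ~~ reach (C :|: S j) v t.
  apply/negP => Hr.
  have vt : v != t.
    by move: vNT; rewrite /t inE; case: (b) => /andP [h1 h2].
  case: (connect_first vt Hr) => z [/avoidP [e [eCS Etl Ehd]] Hz].
  move: eCS; rewrite inE negb_or => /andP [eC eS]; move: eS; rewrite inE Etl eqxx eC /=.
  rewrite /reach Ehd; move/negP; apply; apply: reach_mono Hz; exact: subsetUl.
have Hb : (Wf g P (C :|: S j) t <= U j)%MS.
  apply/sumsmx_subP => u /andP [uP Hr].
  have uv : u != v by apply: contraNneq nrv => <-.
  have HI : (InP g P (C :|: S j) u <= InP g P C u)%MS.
    rewrite /InP; apply: addsmxS => //; apply: sumsmx_mono => e /andP [/andP [-> ->]].
    by rewrite inE negb_or => /andP [-> _].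
  apply: submx_trans HI _.
  apply: (sumsmx_sup u) => //=; rewrite !inE negb_or uv uP /=.
  by apply: reach_mono Hr; exact: subsetUl.
have H1 := Pb C b; have H2 := Pb (C :|: S j) b.
have R1 := mxrankS Ha; have R2 := mxrankS Hb; have R3 := mxrankS key.
have R4 := Hg0 j; have R5 := leq_card_setU C (S j).
rewrite -/t in H1 H2; rewrite -/Pn; move: R5 => [R5 _]; lia.
Qed.

Lemma inv0 : Inv set0 (fun _ => 0).
Proof.
split.
- exact: sub0set.
- by move=> e; rewrite inE.
- by move=> e; rewrite inE.
move=> C b; apply: leq_trans (Hinit C b) _; rewrite leq_add2r; apply: mxrankS.
apply: sumsmx_mono => u Hu; split; first by rewrite inE.
exact: addsmxSl.
Qed.

Lemma iter_inv k : (k <= #|NT|)%N -> exists (P : {set V}) g, #|P| = k /\ Inv P g.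
Proof.
elim: k => [|k IH] Hk; first by exists set0, (fun _ => 0); rewrite cards0; split=> //; exact: inv0.
case: (IH (ltnW Hk)) => P [g [cP HI]].
have HI' := HI; case: HI' => PNT _ _ _.
have [v0 v0A] : exists v0, v0 \in NT :\: P.
  apply/set0Pn; apply: contraTneq Hk => HD.
  have : NT \subset P by rewrite -setD_eq0 HD.
  by move/subset_leq_card; rewrite cP ltnNge => ->.
pose v := [arg min_(x < v0 in NT :\: P) #|anc tl hd x|].
have [vA vmin] : v \in NT :\: P /\ forall x, x \in NT :\: P -> (#|anc tl hd v| <= #|anc tl hd x|)%N.
  by rewrite /v; case: arg_minnP => // x xA Hx; split.
move: vA; rewrite inE => /andP [vP vNT].
have vin : forall e, hd e = v -> tl e \in P.
  move=> e He; apply: contraT => Hn.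
  have : tl e \in NT :\: P by rewrite !inE Hn Ht1out Ht2out.
  move/vmin; have := anc_lt e Hacyc; rewrite He; lia.
case: (step HI vP vNT vin) => g' HI''.
by exists (v |: P), g'; rewrite cardsU1 vP cP.
Qed.

Theorem process : exists g : E -> 'rV[F]_n,
  (forall e, (g e <= Hv g (tl e))%MS) /\
  forall b, (tgt b <= \rank (\sum_(e | hd e == tt b) <<g e>>)%MS)%N.
Proof.
case: (iter_inv (leqnn _)) => P [g [cP [PNT _ Pg Pb]]].
have PE : P = NT by apply/eqP; rewrite eqEcard PNT cP leqnn.
subst P; exists g; split=> [e|b].
  by apply: Pg; rewrite inE Ht1out Ht2out.
apply: leq_trans (Pb set0 b) _; rewrite cards0 addn0; apply: mxrankS.
apply/sumsmx_subP => u /andP [uNT Hr].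
have ut : u = tt b.
  move: uNT; rewrite inE negb_and !negbK => /orP [/eqP Eu|/eqP Eu];
  rewrite Eu in Hr *; apply/esym; apply: reach_stuck Hr => e.
    exact: Ht1out.
  exact: Ht2out.
rewrite ut /InP addsmx_sub; apply/andP; split.
  by case: (b); rewrite /= ?HV0t1 ?HV0t2 sub0mx.
by apply: sumsmx_mono => e /andP [/andP [_ ->] _].
Qed.
End Proc.
Lemma bigmin_le (I : finType) (P : pred I) (F : I -> nat) m i :
  P i -> (\big[minn/m]_(j | P j) F j <= F i)%N.
Proof.
move=> Pi; rewrite unlock; elim: (index_enum I) (mem_index_enum i) => //= x r IH.
rewrite inE => /orP [/eqP <-|/IH]; rewrite /applybig /=.
  by rewrite Pi geq_minl.
by case: (P x) => // H; apply: leq_trans (geq_minr _ _) H.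
Qed.

Lemma bigmin_ex (I : finType) (P : pred I) (F : I -> nat) m :
  \big[minn/m]_(j | P j) F j = m \/ exists i, P i /\ F i = \big[minn/m]_(j | P j) F j.
Proof.
apply: (big_ind (fun y => y = m \/ exists i, P i /\ F i = y)); first by left.
  move=> x y Hx Hy /=; have [->|->] : minn x y = x \/ minn x y = y by rewrite /minn; case: ltnP; [left|right].
  by []. by [].
by move=> i Pi; right; exists i.
Qed.

Section Cuts.
Variables (V E : finType) (tl hd : E -> V).

Lemma separatesP (S T : pred V) C :
  reflect (forall x y, S x -> T y -> ~~ connect (avoid_rel tl hd C) x y)
          (separates tl hd S T C).
Proof.
apply: (iffP forallP) => H.
  by move=> x y Sx Ty; move: (H x) => /forallP /(_ y); rewrite Sx Ty.
by move=> x; apply/forallP => y; apply/implyP => /andP [Sx Ty]; apply: H.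
Qed.

Lemma mincut_le (S T : pred V) C : separates tl hd S T C -> (mincut tl hd S T <= #|C|)%N.
Proof. exact: bigmin_le. Qed.

Lemma mincut_ex (S T : pred V) : (forall x y, S x -> T y -> x != y) ->
  exists C, separates tl hd S T C /\ #|C| = mincut tl hd S T.
Proof.
move=> Hxy; case: (bigmin_ex (fun C => separates tl hd S T C) (fun C : {set E} => #|C|) #|E|).
  rewrite /mincut => ->; exists setT; split; last by rewrite cardsT.
  apply/separatesP => x y Sx Ty; apply/negP => Hc.
  case: (connect_first (Hxy x y Sx Ty) Hc) => z [/avoidP [e [eT _ _]] _].
  by rewrite inE in eT.
by case=> C [HC HC']; exists C.
Qed.

End Cuts.

Lemma rank_sum_rows (F : fieldType) n (I : finType) (P : pred I) (v : I -> 'rV[F]_n) :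
  (\rank (\sum_(i | P i) <<v i>>)%MS <= #|[pred i | P i]|)%N.
Proof.
rewrite -sum1_card.
apply: (big_ind2 (fun (M : 'M[F]_n) k => \rank M <= k)%N).
- by rewrite mxrank0.
- by move=> A a B b HA HB; case: (mxrank_adds_leqif A B) => H _; lia.
- by move=> i _; rewrite genmxE rank_leq_row.
Qed.

Lemma decode_gen (F : fieldType) n (M Pw Pi : 'M[F]_n) r m :
  Pw + Pi = 1%:M -> \rank Pw = r -> (\rank (M *m Pi) <= m)%N ->
  (r + m <= \rank M)%N -> (Pw <= M)%MS.
Proof.
move=> HPP Hrk HPi HM.
have HM' : (M <= Pw + M *m Pi)%MS.
  rewrite {1}(_ : M = M *m Pw + M *m Pi); last by rewrite -mulmxDr HPP mulmx1.
  by apply: addmx_sub_adds; [exact: submxMl | exact: submx_refl].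
have Hr : (\rank (Pw + M)%MS <= \rank M)%N.
  apply: leq_trans (mxrankS (_ : Pw + M <= Pw + M *m Pi)%MS) _.
    by rewrite addsmx_sub addsmxSl HM'.
  case: (mxrank_adds_leqif Pw (M *m Pi)) => H _; lia.
case: (mxrank_leqif_sup (addsmxSr Pw M)) => Hle Heq.
have : (Pw + M <= M)%MS by rewrite -Heq eqn_leq Hle Hr.
by rewrite addsmx_sub => /andP [].
Qed.

Section Main.
Variables (V E : finType) (tl hd : E -> V) (s1 s2 t1 t2 : V).
Hypothesis Hacyc : acyclic tl hd.
Hypotheses (Hs12 : s1 != s2) (Ht12 : t1 != t2)
  (Hst11 : s1 != t1) (Hst12 : s1 != t2) (Hst21 : s2 != t1) (Hst22 : s2 != t2)
  (Hs1in : forall e, hd e != s1) (Hs2in : forall e, hd e != s2)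
  (Ht1out : forall e, tl e != t1) (Ht2out : forall e, tl e != t2).
Variables (R1 R2 : nat) (F : finFieldType).

Definition V0 (u : V) : 'M[F]_(R1 + R2) :=
  if u == s1 then pid_mx R1 else if u == s2 then copid_mx R1 else 0.

Definition lp (u : 'rV[F]_(R1 + R2)) : 'rV[F]_R1 := lsubmx u.
Definition rp (u : 'rV[F]_(R1 + R2)) : 'rV[F]_R2 := rsubmx u.

Lemma pid_mul (D : 'rV[F]_(R1 + R2)) : D *m pid_mx R1 = row_mx (lp D) (0 : 'rV_R2).
Proof.
by rewrite -{1}(hsubmxK D) (@pid_mx_block F R2 R2 R1) mul_row_block !mulmx0 mulmx1 !addr0.
Qed.

Lemma copid_mul (D : 'rV[F]_(R1 + R2)) : D *m copid_mx R1 = row_mx (0 : 'rV_R1) (rp D).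
Proof.
rewrite /copid_mx mulmxBr mulmx1 pid_mul -{1}(hsubmxK D) opp_row_mx add_row_mx.
by rewrite subrr oppr0 addr0.
Qed.

Definition dot n (u x : 'rV[F]_n) : F := (u *m x^T) 0 0.

Lemma dot_row (u : 'rV[F]_(R1 + R2)) x1 x2 : dot u (row_mx x1 x2) =
  \sum_k lp u 0 k * x1 0 k + \sum_k rp u 0 k * x2 0 k.
Proof.
rewrite /dot tr_row_mx -{1}(hsubmxK u) mul_row_col !mxE.
by congr (_ + _); apply: eq_bigr => k _; rewrite !mxE.
Qed.

Section G.
Variable g : E -> 'rV[F]_(R1 + R2).
Hypothesis Hg : forall e, (g e <= Hv hd V0 g (tl e))%MS.

Lemma g_s1 e : tl e = s1 -> (g e <= (pid_mx R1 : 'M_(R1 + R2)))%MS.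
Proof.
move=> He; have := Hg e; rewrite He /Hv /V0 eqxx big_pred0 ?addsmx0 //.
by move=> e'; apply/negbTE.
Qed.

Lemma g_s2 e : tl e = s2 -> (g e <= (copid_mx R1 : 'M_(R1 + R2)))%MS.
Proof.
move=> He; have := Hg e; rewrite He /Hv /V0 eq_sym (negbTE Hs12) eqxx big_pred0 ?addsmx0 //.
by move=> e'; apply/negbTE.
Qed.

Lemma g_int e : tl e != s1 -> tl e != s2 ->
  (g e <= \sum_(e' | hd e' == tl e) <<g e'>>)%MS.
Proof.
move=> N1 N2; have := Hg e; rewrite /Hv /V0 (negbTE N1) (negbTE N2).
by rewrite adds0mx.
Qed.

Lemma g_s1_form e : tl e = s1 -> rp (g e) = 0.
Proof. by move/g_s1/submxP => [D ->]; rewrite pid_mul /rp row_mxKr. Qed.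

Lemma g_s2_form e : tl e = s2 -> lp (g e) = 0.
Proof. by move/g_s2/submxP => [D ->]; rewrite copid_mul /lp row_mxKl. Qed.

Definition bc e : {ffun E -> F} :=
  odflt 0 [pick c : {ffun E -> F} | g e == \sum_(e' | hd e' == tl e) c e' *: g e'].

Lemma bcP e : tl e != s1 -> tl e != s2 ->
  g e = \sum_(e' | hd e' == tl e) bc e e' *: g e'.
Proof.
move=> N1 N2; rewrite /bc; case: pickP => [c /eqP //|Hn]; exfalso.
case/sub_sumsmxP: (g_int N1 N2) => u_ Hu.
have Ha : forall e', exists a : F, u_ e' *m <<g e'>>%MS = a *: g e'.
  by move=> e'; apply/sub_rVP; rewrite -(genmxE (g e')); exact: submxMl.
pose c := [ffun e' => odflt 0 [pick a : F | u_ e' *m <<g e'>>%MS == a *: g e']].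
move: (Hn c); rewrite Hu; move/negP; apply; apply/eqP; apply: eq_bigr => e' _.
rewrite ffunE; case: pickP => [a /eqP //|Hn']; case: (Ha e') => a Ha'.
by move: (Hn' a); rewrite Ha' eqxx.
Qed.

Definition a1c e := lp (g e).
Definition a2c e := rp (g e).
Definition bcode e' e := bc e e'.

Lemma cons_dot x1 x2 y :
  consistent tl hd s1 s2 a1c a2c bcode x1 x2 y ->
  forall e, y e = dot (g e) (row_mx x1 x2).
Proof.
move=> Hc.
suff H : forall k e, (#|anc tl hd (tl e)| < k)%N -> y e = dot (g e) (row_mx x1 x2).
  by move=> e; apply: (H _ e (ltnSn _)).
elim=> // k IH e Hk.
case: (Hc e) => H1 [H2 H3].
case: (eqVneq (tl e) s1) => [E1|N1].
  rewrite H1 // dot_row g_s1_form // [X in _ + X]big1 ?addr0 // => i _.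
  by rewrite mxE mul0r.
case: (eqVneq (tl e) s2) => [E2|N2].
  rewrite H2 // dot_row g_s2_form // [X in X + _]big1 ?add0r // => i _.
  by rewrite mxE mul0r.
rewrite H3; [|by apply/eqP|by apply/eqP].
rewrite (bcP N1 N2) /dot mulmx_suml summxE; apply: eq_bigr => e' /eqP He'.
rewrite -scalemxAl mxE /bcode IH //.
apply: leq_trans (anc_lt e' Hacyc) _; rewrite He'; exact: Hk.
Qed.

Lemma interf (sa sb t : V) (Pi : 'M[F]_(R1 + R2)) (C : {set E}) :
  (forall v, v != sa -> v != sb -> (v != s1) && (v != s2)) ->
  (forall e, tl e = sb -> (g e *m Pi <= (0 : 'M_(R1 + R2)))%MS) ->
  separates tl hd (pred1 sa) (pred1 t) C ->
  forall e, hd e = t -> (g e *m Pi <= \sum_(c in C) <<g c *m Pi>>)%MS.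
Proof.
move=> Hss Hsb /separatesP Hsep.
set Z := (\sum_(c in C) <<g c *m Pi>>)%MS.
have key : forall k e, (#|anc tl hd (tl e)| < k)%N -> e \notin C ->
    ~~ reach tl hd C sa (tl e) -> (g e *m Pi <= Z)%MS.
  elim=> // k IH e Hk eC Hr.
  case: (eqVneq (tl e) sa) => [E1|Na]; first by rewrite E1 /reach connect0 in Hr.
  case: (eqVneq (tl e) sb) => [E2|Nb].
    by apply: submx_trans (Hsb _ E2) (sub0mx _ _).
  case/andP: (Hss _ Na Nb) => N1 N2.
  apply: submx_trans (submxMr Pi (g_int N1 N2)) _.
  rewrite sumsmxMr; apply/sumsmx_subP => e' /eqP He'.
  apply: submx_trans (submxMr Pi (_ : <<g e'>> <= g e')%MS) _; first by rewrite genmxE.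
  case: (boolP (e' \in C)) => e'C.
    by apply: (sumsmx_sup e') => //; rewrite genmxE.
  apply: IH => //.
    by apply: leq_trans (anc_lt e' Hacyc) _; rewrite He'; exact: Hk.
  apply: contra Hr => Hr'; rewrite /reach -He'.
  exact: connect_trans Hr' (connect1 (avoid_edge tl hd e'C)).
move=> e He; case: (boolP (e \in C)) => eC.
  by apply: (sumsmx_sup e) => //; rewrite genmxE.
apply: (key _ _ (ltnSn _) eC); apply: contra (Hsep sa t (eqxx _) (eqxx _)) => Hr.
by rewrite -He; exact: connect_trans Hr (connect1 (avoid_edge tl hd eC)).
Qed.

Lemma dec_t (t sa sb : V) (Pw Pi : 'M[F]_(R1 + R2)) r R' (C : {set E}) :
  (forall v, v != sa -> v != sb -> (v != s1) && (v != s2)) ->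
  (forall e, tl e = sb -> (g e *m Pi <= (0 : 'M_(R1 + R2)))%MS) ->
  separates tl hd (pred1 sa) (pred1 t) C ->
  Pw + Pi = 1%:M -> \rank Pw = r -> \rank Pi = R' ->
  (r + minn R' #|C| <= \rank (\sum_(e | hd e == t) <<g e>>)%MS)%N ->
  (Pw <= \sum_(e | hd e == t) <<g e>>)%MS.
Proof.
move=> Hss Hsb Hsep HPP Hr HR' Hrk.
apply: (decode_gen HPP Hr _ Hrk); rewrite leq_min; apply/andP; split.
  by rewrite -HR'; apply: mxrankM_maxr.
apply: leq_trans (mxrankS (_ : _ <= \sum_(c in C) <<g c *m Pi>>)%MS) _.
  rewrite sumsmxMr; apply/sumsmx_subP => e /eqP He.
  apply: submx_trans (submxMr Pi (_ : <<g e>> <= g e)%MS) _; first by rewrite genmxE.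
  exact: interf Hss Hsb Hsep e He.
apply: leq_trans (rank_sum_rows _ _) _.
by rewrite leq_eqVlt; apply/orP; left; apply/eqP; apply: eq_card.
Qed.

Lemma annihil t (x x' : 'rV[F]_(R1 + R2)) :
  (forall e, hd e = t -> dot (g e) x = dot (g e) x') ->
  (\sum_(e | hd e == t) <<g e>> <= kermx (x - x')^T)%MS.
Proof.
move=> H; apply/sumsmx_subP => e /eqP He; rewrite genmxE sub_kermx.
apply/eqP/matrixP => i j; rewrite !ord1 linearB /= mulmxBr [LHS]mxE.
by move: (H e He); rewrite /dot => ->; rewrite !mxE subrr.
Qed.

Lemma pid_kill (d1 : 'rV[F]_R1) (d2 : 'rV[F]_R2) :
  (pid_mx R1 : 'M_(R1 + R2)) *m (row_mx d1 d2)^T = 0 -> d1 = 0.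
Proof.
rewrite tr_row_mx (@pid_mx_block F R2 R2 R1) mul_block_col !mul0mx mul1mx !addr0.
move/eqP; rewrite col_mx_eq0 => /andP [/eqP H _].
by apply: trmx_inj; rewrite H trmx0.
Qed.

Lemma copid_kill (d1 : 'rV[F]_R1) (d2 : 'rV[F]_R2) :
  (copid_mx R1 : 'M_(R1 + R2)) *m (row_mx d1 d2)^T = 0 -> d2 = 0.
Proof.
rewrite /copid_mx mulmxBl mul1mx tr_row_mx (@pid_mx_block F R2 R2 R1) mul_block_col.
rewrite !mul0mx mul1mx !addr0 opp_col_mx add_col_mx subrr oppr0 addr0.
move/eqP; rewrite col_mx_eq0 => /andP [_ /eqP H].
by apply: trmx_inj; rewrite H trmx0.
Qed.
End G.

Lemma init_gen (ra rb kb kab c : nat) (X Pa Pb : 'M[F]_(R1 + R2)) (ba bb : bool) :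
  \rank Pa = ra -> \rank Pb = rb -> (ra + rb <= \rank (Pa + Pb)%MS)%N ->
  (ba -> (Pa <= X)%MS) -> (bb -> (Pb <= X)%MS) -> (~~ bb -> kb <= c)%N ->
  (~~ ba -> ~~ bb -> kab <= c)%N -> (~~ ba -> kab <= c + kb)%N -> (ra + kb <= kab)%N ->
  (ra + minn rb kb <= \rank X + c)%N.
Proof.
move=> Ha Hb Hab HX1 HX2 H1 H2 H3 H4.
case: ba bb HX1 HX2 H1 H2 H3 => [] [] HX1 HX2 H1 H2 H3.
- have HPX : (Pa + Pb <= X)%MS by rewrite addsmx_sub HX1 ?HX2.
  have := mxrankS HPX; lia.
- have := mxrankS (HX1 isT); rewrite Ha; have := H1 isT; lia.
- have := mxrankS (HX2 isT); rewrite Hb; have := H3 isT; lia.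
- have := H2 isT isT; lia.
Qed.

Lemma cut_facts (sa sb t : V) (S : pred V) C :
  sa != t -> sb != t -> (forall x, S x = (x == sa) || (x == sb)) ->
  [/\ ~~ reach tl hd C sb t -> (mincut tl hd (pred1 sb) (pred1 t) <= #|C|)%N,
      ~~ reach tl hd C sa t -> ~~ reach tl hd C sb t -> (mincut tl hd S (pred1 t) <= #|C|)%N &
      ~~ reach tl hd C sa t ->
        (mincut tl hd S (pred1 t) <= #|C| + mincut tl hd (pred1 sb) (pred1 t))%N].
Proof.
move=> Hat Hbt HS; split.
- move=> Hr; apply: mincut_le; apply/separatesP => x y /eqP -> /eqP -> //.
- move=> Hr1 Hr2; apply: mincut_le; apply/separatesP => x y; rewrite HS.
  by case/orP => /eqP -> /eqP ->.
move=> Hr1.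
case: (@mincut_ex _ _ tl hd (pred1 sb) (pred1 t)) => [x y /eqP -> /eqP -> //|C2 [HC2 cC2]].
rewrite -cC2; apply: leq_trans (mincut_le (_ : separates tl hd S (pred1 t) (C :|: C2))) _.
  apply/separatesP => x y; rewrite HS => /orP [] /eqP -> /eqP ->.
    by apply: contra Hr1; apply: reach_mono; exact: subsetUl.
  move/separatesP: HC2 => /(_ sb t (eqxx _) (eqxx _)); apply: contra.
  by apply: reach_mono; exact: subsetUr.
by case: (leq_card_setU C C2).
Qed.

Lemma achieve : (#|{: {set E} * bool}| < #|F|)%N ->
  let k1_2 := mincut tl hd (pred1 s1) (pred1 t2) in
  let k2_1 := mincut tl hd (pred1 s2) (pred1 t1) in
  let k12_1 := mincut tl hd (pred2 s1 s2) (pred1 t1) in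
  let k12_2 := mincut tl hd (pred2 s1 s2) (pred1 t2) in
  (k1_2 + k2_1 <= minn k12_1 k12_2)%N ->
  (R1 <= k12_1 - k2_1)%N ->
  (R2 <= k12_2 - k1_2)%N ->
  achievable tl hd s1 s2 t1 t2 R1 R2.
Proof.
move=> HF k1_2 k2_1 k12_1 k12_2 Hk HR1 HR2.
have HA1 : (R1 + k2_1 <= k12_1)%N by lia.
have HA2 : (R2 + k1_2 <= k12_2)%N by lia.
have HRn : (R1 <= R1 + R2)%N by apply: leq_addr.
have rpid : \rank (pid_mx R1 : 'M[F]_(R1 + R2)) = R1 by rewrite rank_pid_mx.
have rcopid : \rank (copid_mx R1 : 'M[F]_(R1 + R2)) = R2 by rewrite rank_copid_mx // addKn.
have rboth : (R1 + R2 <= \rank ((pid_mx R1 : 'M[F]_(R1 + R2)) + (copid_mx R1 : 'M[F]_(R1 + R2)))%MS)%N.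
  have H1 : (pid_mx R1 : 'M[F]_(R1 + R2)) + copid_mx R1 = 1%:M.
    by rewrite /copid_mx addrC subrK.
  have := mxrankS (addmx_sub_adds (submx_refl (pid_mx R1 : 'M[F]_(R1 + R2)))
                    (submx_refl (copid_mx R1 : 'M[F]_(R1 + R2)))).
  by rewrite H1 mxrank1.
pose tgt (b : bool) := if b then (R1 + minn R2 k2_1)%N else (R2 + minn R1 k1_2)%N.
have Hsum1 C t : reach tl hd C s1 t -> ((pid_mx R1 : 'M[F]_(R1 + R2)) <= \sum_(u | reach tl hd C u t) V0 u)%MS.
  by move=> Hr; apply: (sumsmx_sup s1) => //; rewrite /V0 eqxx.
have Hsum2 C t : reach tl hd C s2 t -> ((copid_mx R1 : 'M[F]_(R1 + R2)) <= \sum_(u | reach tl hd C u t) V0 u)%MS.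
  by move=> Hr; apply: (sumsmx_sup s2) => //; rewrite /V0 eq_sym (negbTE Hs12) eqxx.
have Hinit : forall C b, (tgt b <= \rank (\sum_(u | reach tl hd C u (tt t1 t2 b)) V0 u)%MS + #|C|)%N.
  move=> C [] /=.
    case: (@cut_facts s1 s2 t1 (pred2 s1 s2) C Hst11 Hst21 (fun x => erefl)) => H1 H2 H3.
    apply: (init_gen rpid rcopid rboth (Hsum1 C t1) (Hsum2 C t1) H1 H2 H3 HA1).
  case: (@cut_facts s2 s1 t2 (pred2 s1 s2) C Hst22 Hst12 (fun x => orbC _ _)) => H1 H2 H3.
  have rboth' : (R2 + R1 <= \rank ((copid_mx R1 : 'M[F]_(R1 + R2)) + (pid_mx R1 : 'M[F]_(R1 + R2)))%MS)%N.
    by rewrite addnC addsmxC.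
  apply: (init_gen rcopid rpid rboth' (Hsum2 C t2) (Hsum1 C t2) H1 H2 H3 HA2).
have V0t1 : V0 t1 = 0 by rewrite /V0 eq_sym (negbTE Hst11) eq_sym (negbTE Hst21).
have V0t2 : V0 t2 = 0 by rewrite /V0 eq_sym (negbTE Hst12) eq_sym (negbTE Hst22).
have [g [Hg Hrank]] := process Hacyc Ht12 Ht1out Ht2out V0t1 V0t2 HF Hinit.
exists F, (a1c g), (a2c g), (bcode g).
move=> x1 x1' x2 x2' y y' Hc Hc'.
have Hd : forall t, (forall e, hd e = t -> y e = y' e) ->
    (\sum_(e | hd e == t) <<g e>> <= kermx (row_mx (x1 - x1') (x2 - x2'))^T)%MS.
  move=> t Hy; rewrite -add_row_mx -opp_row_mx; apply: annihil => e He.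
  by rewrite -(cons_dot Hg Hc) -(cons_dot Hg Hc') Hy.
split=> Hy.
  case: (@mincut_ex _ _ tl hd (pred1 s2) (pred1 t1)) => [x z /eqP -> /eqP -> //|C [HC cC]].
  have Hss : forall v, v != s2 -> v != s1 -> (v != s1) && (v != s2) by move=> v -> ->.
  have Hsb : forall e, tl e = s1 -> (g e *m copid_mx R1 <= (0 : 'M_(R1 + R2)))%MS.
    move=> e /(g_s1 Hg) /submxP [D ->]; rewrite -mulmxA mul_pid_mx_copid // mulmx0.
    exact: sub0mx.
  have HPP : (pid_mx R1 : 'M[F]_(R1 + R2)) + copid_mx R1 = 1%:M by rewrite /copid_mx addrC subrK.
  have := Hrank true; rewrite /= /k2_1 -cC => Hr.
  have Hsub := dec_t Hg Hss Hsb HC HPP rpid rcopid Hr.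
  have := submx_trans Hsub (Hd _ Hy); rewrite sub_kermx => /eqP /pid_kill /eqP.
  by rewrite subr_eq0 => /eqP.
case: (@mincut_ex _ _ tl hd (pred1 s1) (pred1 t2)) => [x z /eqP -> /eqP -> //|C [HC cC]].
have Hss : forall v, v != s1 -> v != s2 -> (v != s1) && (v != s2) by move=> v -> ->.
have Hsb : forall e, tl e = s2 -> (g e *m pid_mx R1 <= (0 : 'M_(R1 + R2)))%MS.
  move=> e /(g_s2 Hg) /submxP [D ->]; rewrite -mulmxA mul_copid_mx_pid // mulmx0.
  exact: sub0mx.
have HPP : (copid_mx R1 : 'M[F]_(R1 + R2)) + pid_mx R1 = 1%:M by rewrite /copid_mx subrK.
have := Hrank false; rewrite /= /k1_2 -cC => Hr.
have Hsub := dec_t Hg Hss Hsb HC HPP rcopid rpid Hr.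
have := submx_trans Hsub (Hd _ Hy); rewrite sub_kermx => /eqP /copid_kill /eqP.
by rewrite subr_eq0 => /eqP.
Qed.
End Main.
End Dev.
Import Dev.
Unset Implicit Arguments.

Theorem theorem2 (V E : finType) (tl hd : E -> V) (s1 s2 t1 t2 : V)
  (Hacyc : acyclic tl hd)
  (Hs12 : s1 != s2) (Ht12 : t1 != t2)
  (Hst11 : s1 != t1) (Hst12 : s1 != t2) (Hst21 : s2 != t1) (Hst22 : s2 != t2)
  (Hs1in : forall e, hd e != s1) (Hs2in : forall e, hd e != s2)
  (Ht1out : forall e, tl e != t1) (Ht2out : forall e, tl e != t2)
  (R1 R2 : nat) :
  let k1_2 := mincut tl hd (pred1 s1) (pred1 t2) in
  let k2_1 := mincut tl hd (pred1 s2) (pred1 t1) in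
  let k12_1 := mincut tl hd (pred2 s1 s2) (pred1 t1) in
  let k12_2 := mincut tl hd (pred2 s1 s2) (pred1 t2) in
  k1_2 + k2_1 <= minn k12_1 k12_2 ->
  R1 <= k12_1 - k2_1 ->
  R2 <= k12_2 - k1_2 ->
  achievable tl hd s1 s2 t1 t2 R1 R2.
Proof.
have [p Hp pprime] := prime_above #|{: {set E} * bool}|.
apply: (@achieve V E tl hd s1 s2 t1 t2 Hacyc Hs12 Ht12 Hst11 Hst12 Hst21 Hst22
          Hs1in Hs2in Ht1out Ht2out R1 R2 ('F_p : finFieldType)).
by rewrite card_Fp.
Qed.
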